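(* Let $H_{\mathcal L,\Theta}$ be a Hamburger Hamiltonian with $N<\infty$ and let $m$ be its Weyl--Titchmarsh function. Let $\kappa$ be the number of $k\in\{1,\dots,N\}$ with $\theta_k\notin\pi\mathbb Z$, and for $j\in\{0,\dots,\kappa\}$ let $k(j)$ be the largest integer $k\in\{0,\dots,N\}$ such that exactly $j$ of $\theta_0,\dots,\theta_{k-1}$ are not in $\pi\mathbb Z$. Define $l_j:=\ell_{k(j)}\sin^2(\theta_{k(j)})$ for $j\in\{0,\dots,\kappa\}$ and, for $j\in\{0,\dots,\kappa-1\}$, $\omega_j:=\cot(\theta_{k(j+1)})-\cot(\theta_{k(j)})$ and $\upsilon_j:=0$ if $k(j+1)-k(j)=1$, $\upsilon_j:=\ell_{k(j)+1}$ if $k(j+1)-k(j)=2$ (these are the only possibilities). Then for all $z\in\mathbb C\setminus\mathbb R$, $$m(z)=\cfrac{1}{-l_0z+\cfrac{1}{\omega_0+\upsilon_0z+\cfrac{1}{\ddots+\cfrac{1}{\omega_{\kappa-1}+\upsilon_{\kappa-1}z+\cfrac{1}{-l_\kappa z}}}}},$$ where $\frac{1}{-l_\kappa z}$ is interpreted as $0$ if $l_\kappa=\infty$.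
   Context: For $\theta\in\mathbb R$ let $H_\theta:=\begin{pmatrix}\cos^2\theta&\cos\theta\sin\theta\\ \cos\theta\sin\theta&\sin^2\theta\end{pmatrix}$. Hamburger Hamiltonian: fix $L\in(0,\infty]$, $N\in\mathbb Z_{\ge0}\cup\{\infty\}$, reals $\{\ell_k\}_{k=0}^{N-1}$ and $\{\theta_k\}_{k=0}^{N}$ with $\theta_0=\pi/2$, $\ell_k>0$ and $\theta_k<\theta_{k+1}<\theta_k+\pi$ for $k\in\{0,\dots,N-1\}$. Set $x_{-1}:=0$, $x_k:=x_{k-1}+\ell_k$. If $N<\infty$, assume $x_{N-1}<x_N:=L$ (and put $\ell_N:=L-x_{N-1}\in(0,\infty]$) and $\theta_N\notin\pi\mathbb Z$; if $N=\infty$, $L:=\sum_{k\ge0}\ell_k$. Then $H_{\mathcal L,\Theta}(x):=\sum_{k=0}^N H_{\theta_k}\mathbb 1_{[x_{k-1},x_k)}(x)$, $x\in[0,L)$. Its Weyl--Titchmarsh function is $m(z):=\lim_{x\to L}U_{11}(z,x)/U_{12}(z,x)$, $z\in\mathbb C\setminus\mathbb R$, where $U(z,\cdot)$ solves $U(z,x)=I-z\int_0^xJH_{\mathcal L,\Theta}(t)U(z,t)\,dt$, $J=\begin{pmatrix}0&1\\-1&0\end{pmatrix}$. *)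

(* Defs.v *)
From Stdlib Require Import Reals ClassicalDescription Lia.
Open Scope R_scope.

Definition Cx : Type := (R * R)%type.
Definition Re (z : Cx) : R := fst z.
Definition Im (z : Cx) : R := snd z.
Definition RtoC (a : R) : Cx := (a, 0).
Definition Cadd (u v : Cx) : Cx := (Re u + Re v, Im u + Im v).
Definition Copp (u : Cx) : Cx := (- Re u, - Im u).
Definition Cmul (u v : Cx) : Cx :=
  (Re u * Re v - Im u * Im v, Re u * Im v + Im u * Re v).
Definition Cinv (u : Cx) : Cx :=
  (Re u / (Re u ^ 2 + Im u ^ 2), - Im u / (Re u ^ 2 + Im u ^ 2)).
Definition Cdiv (u v : Cx) : Cx := Cmul u (Cinv v).
Definition Cnorm (u : Cx) : R := sqrt (Re u ^ 2 + Im u ^ 2).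

(* A 2x2 matrix is a function of indices i j in {0,1}. *)
Definition Hmat (th : R) (i j : nat) : R :=
  match i, j with
  | 0%nat, 0%nat => cos th ^ 2
  | 0%nat, 1%nat => cos th * sin th
  | 1%nat, 0%nat => cos th * sin th
  | _, _ => sin th ^ 2
  end.
Definition Jmat (i j : nat) : R :=
  match i, j with
  | 0%nat, 1%nat => 1
  | 1%nat, 0%nat => -1
  | _, _ => 0
  end.
Definition JHmat (th : R) (i j : nat) : R :=
  Jmat i 0 * Hmat th 0 j + Jmat i 1 * Hmat th 1 j.

(* X k = x_{k-1} = l_0 + ... + l_{k-1}  (so X 0 = x_{-1} = 0) *)
Fixpoint X (ell : nat -> R) (k : nat) : R :=
  match k with 0%nat => 0 | S k' => X ell k' + ell k' end.

(* index of the interval [x_{k-1}, x_k) containing t (intervals k<N) ;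
   = N on [x_{N-1}, L) *)
Fixpoint idx_aux (ell : nat -> R) (t : R) (n : nat) : nat :=
  match n with
  | 0%nat => 0%nat
  | S n' => (idx_aux ell t n' + (if Rle_dec (X ell (S n')) t then 1 else 0))%nat
  end.
Definition idx (N : nat) (ell : nat -> R) (t : R) : nat := idx_aux ell t N.

Definition Ham (N : nat) (ell th : nat -> R) (t : R) : nat -> nat -> R :=
  Hmat (th (idx N ell t)).
Definition JHam (N : nat) (ell th : nat -> R) (t : R) : nat -> nat -> R :=
  JHmat (th (idx N ell t)).

(* L : option R, None meaning L = +infinity *)
Definition in_dom (L : option R) (x : R) : Prop :=
  0 <= x /\ match L with Some L0 => x < L0 | None => True end.

Definition delta (i j : nat) : Cx := if Nat.eqb i j then RtoC 1 else RtoC 0.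

(* U : R -> (2x2 complex matrix) solves
   U(z,x) = I - z int_0^x J H(t) U(z,t) dt   for all x in [0,L),
   the integral being the (Riemann) integral of real and imaginary parts. *)
Definition solves_IE (N : nat) (ell th : nat -> R) (L : option R) (z : Cx)
    (U : R -> nat -> nat -> Cx) : Prop :=
  forall x, in_dom L x -> forall i j, (i < 2)%nat -> (j < 2)%nat ->
    exists (pre : Riemann_integrable
             (fun t => JHam N ell th t i 0 * Re (U t 0%nat j)
                     + JHam N ell th t i 1 * Re (U t 1%nat j)) 0 x)
           (pim : Riemann_integrable
             (fun t => JHam N ell th t i 0 * Im (U t 0%nat j)
                     + JHam N ell th t i 1 * Im (U t 1%nat j)) 0 x),
      U x i j = Cadd (delta i j) (Copp (Cmul z (RiemannInt pre, RiemannInt pim))).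

Definition tends_to_L (L : option R) (f : R -> Cx) (c : Cx) : Prop :=
  match L with
  | Some L0 => forall eps, 0 < eps -> exists delta, 0 < delta /\
      forall x, in_dom L x -> L0 - delta < x -> Cnorm (Cadd (f x) (Copp c)) < eps
  | None => forall eps, 0 < eps -> exists M,
      forall x, in_dom L x -> M <= x -> Cnorm (Cadd (f x) (Copp c)) < eps
  end.

Definition in_piZ (t : R) : Prop := exists n : Z, t = IZR n * PI.
Definition notpiZb (t : R) : nat :=
  if excluded_middle_informative (in_piZ t) then 0%nat else 1%nat.

Fixpoint cnt_from (th : nat -> R) (a n : nat) : nat :=
  match n with 0%nat => 0%nat | S n' => (cnt_from th a n' + notpiZb (th (a + n')%nat))%nat end.

Definition kappa (N : nat) (th : nat -> R) : nat := cnt_from th 1 N.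

(* largest k in {0..n} with exactly j of theta_0..theta_{k-1} not in pi Z
   (returns 0 if none) *)
Fixpoint kj_aux (th : nat -> R) (j n : nat) : nat :=
  match n with
  | 0%nat => 0%nat
  | S n' => if Nat.eqb (cnt_from th 0 (S n')) j then S n' else kj_aux th j n'
  end.
Definition kj (N : nat) (th : nat -> R) (j : nat) : nat := kj_aux th j N.

Definition cot (t : R) : R := cos t / sin t.

(* ell_k as extended real: None = +infinity; ell_N = L - x_{N-1} *)
Definition ellx (N : nat) (ell : nat -> R) (L : option R) (k : nat) : option R :=
  if Nat.ltb k N then Some (ell k)
  else match L with Some L0 => Some (L0 - X ell N) | None => None end.

Definition lj (N : nat) (ell th : nat -> R) (L : option R) (j : nat) : option R :=
  match ellx N ell L (kj N th j) with
  | Some a => Some (a * sin (th (kj N th j)) ^ 2)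
  | None => None
  end.

Definition omegaj (N : nat) (th : nat -> R) (j : nat) : R :=
  cot (th (kj N th (S j))) - cot (th (kj N th j)).

Definition upsj (N : nat) (ell th : nat -> R) (j : nat) : R :=
  if Nat.eqb (kj N th (S j) - kj N th j) 1 then 0 else ell (S (kj N th j)).

Definition inv_mlz (l : option R) (z : Cx) : Cx :=
  match l with Some a => Cinv (Cmul (RtoC (- a)) z) | None => RtoC 0 end.

Fixpoint cfrac (N : nat) (ell th : nat -> R) (L : option R) (z : Cx) (n j : nat) : Cx :=
  match n with
  | 0%nat => inv_mlz (lj N ell th L j) z
  | S n' =>
    let lz := match lj N ell th L j with
              | Some a => Cmul (RtoC (- a)) z | None => RtoC 0 end in
    Cinv (Cadd lz
      (Cinv (Cadd (Cadd (RtoC (omegaj N th j)) (Cmul (RtoC (upsj N ell th j)) z))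
                  (cfrac N ell th L z n' (S j)))))
  end.

(* Main.v *)
Require Import Defs.
From Stdlib Require Import Reals.
From Stdlib Require Import Lra Lia Psatz Field ClassicalDescription.
From Coquelicot Require Import Hierarchy RInt.
Open Scope R_scope.

Open Scope R_scope.

Notation Cz := (RtoC 0).
Notation Co := (RtoC 1).
Definition Csub (a b : Cx) : Cx := Cadd a (Copp b).

Lemma Cx_eq (a b : Cx) : Re a = Re b -> Im a = Im b -> a = b.
Proof. destruct a, b; unfold Re, Im; simpl; intros; subst; auto. Qed.

Ltac cx := repeat match goal with c : Cx |- _ => destruct c end;
  apply Cx_eq; unfold Cadd, Cmul, Copp, Csub, RtoC, Re, Im; simpl.

Lemma Cring : ring_theory Cz Co Cadd Cmul Csub Copp (@eq Cx).
Proof.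
  constructor; intros; cx; ring.
Qed.

Lemma Cnz_norm (a : Cx) : a <> Cz -> Re a ^ 2 + Im a ^ 2 <> 0.
Proof.
  destruct a as [x y]; unfold Re, Im; simpl; intros H E.
  apply H. assert (x = 0) by nra. assert (y = 0) by nra. subst. reflexivity.
Qed.

Lemma Cnz_norm_pos (a : Cx) : a <> Cz -> 0 < Re a ^ 2 + Im a ^ 2.
Proof.
  intros H; pose proof (Cnz_norm a H). destruct a as [x y]; unfold Re, Im in *; simpl in *. nra.
Qed.

Lemma Cfield : field_theory Cz Co Cadd Cmul Csub Copp Cdiv Cinv (@eq Cx).
Proof.
  constructor.
  - exact Cring.
  - unfold RtoC. intro H. injection H. lra.
  - reflexivity.
  - intros p Hp. pose proof (Cnz_norm p Hp) as N. destruct p as [x y].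
    unfold Re, Im in N; simpl in N.
    apply Cx_eq; unfold Cmul, Cinv, RtoC, Re, Im; simpl; [field | field]; (intro E; apply N; nra).
Qed.

Add Field CxField : Cfield.

Lemma RtoC_add a b : RtoC (a + b) = Cadd (RtoC a) (RtoC b).
Proof. cx; ring. Qed.
Lemma RtoC_mul a b : RtoC (a * b) = Cmul (RtoC a) (RtoC b).
Proof. cx; ring. Qed.
Lemma RtoC_opp a : RtoC (- a) = Copp (RtoC a).
Proof. cx; ring. Qed.
Lemma RtoC_sub a b : RtoC (a - b) = Csub (RtoC a) (RtoC b).
Proof. cx; ring. Qed.
Lemma RtoC_nz a : a <> 0 -> RtoC a <> Cz.
Proof. intros H E; apply H; unfold RtoC in E; injection E; auto. Qed.

Lemma Cmul_nz a b : a <> Cz -> b <> Cz -> Cmul a b <> Cz.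
Proof.
  intros Ha Hb E.
  assert (Cmul (Cmul a b) (Cmul (Cinv a) (Cinv b)) = Co) by (field; auto).
  rewrite E in H. unfold Cmul, RtoC in H; simpl in H. injection H. intros; lra.
Qed.

Lemma Im_nz a : Im a <> 0 -> a <> Cz.
Proof. intros H E; subst; apply H; reflexivity. Qed.

Lemma Im_Cinv a : Im (Cinv a) = - Im a / (Re a ^ 2 + Im a ^ 2).
Proof. reflexivity. Qed.
Lemma Im_add a b : Im (Cadd a b) = Im a + Im b.
Proof. reflexivity. Qed.
Lemma Im_Rmul r a : Im (Cmul (RtoC r) a) = r * Im a.
Proof. unfold Cmul, RtoC, Im, Re; simpl; ring. Qed.
Lemma Im_RtoC r : Im (RtoC r) = 0.
Proof. reflexivity. Qed.

Open Scope R_scope.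

Lemma RInt_lin2 : forall f g : R -> R, forall a b c d, ex_RInt f a b -> ex_RInt g a b ->
  RInt (fun x => c * f x + d * g x) a b = c * RInt f a b + d * RInt g a b.
Proof.
intros.
apply is_RInt_unique.
exact (is_RInt_plus (V:=R_NormedModule) _ _ a b _ _ (is_RInt_scal (V:=R_NormedModule) f a b c _ (RInt_correct f a b H)) (is_RInt_scal (V:=R_NormedModule) g a b d _ (RInt_correct g a b H0))).
Qed.

Lemma RInt_cst (a b c : R) : RInt (fun _ => c) a b = (b - a) * c.
Proof. rewrite RInt_const. reflexivity. Qed.

Lemma exR_2 (f : R -> R) a b c : a <= b <= c -> ex_RInt f a c -> ex_RInt f b c.
Proof. intros. exact (ex_RInt_Chasles_2 (V:=R_CompleteNormedModule) f a b c H H0). Qed.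
Lemma exR_1 (f : R -> R) a b c : a <= b <= c -> ex_RInt f a c -> ex_RInt f a b.
Proof. intros. exact (ex_RInt_Chasles_1 (V:=R_CompleteNormedModule) f a b c H H0). Qed.
Lemma RChasles (f : R -> R) a b c : ex_RInt f a b -> ex_RInt f b c -> RInt f a b + RInt f b c = RInt f a c.
Proof. intros. exact (RInt_Chasles (V:=R_CompleteNormedModule) f a b c H H0). Qed.
Lemma RInt_extR (f g : R -> R) a b : (forall x, Rmin a b < x < Rmax a b -> f x = g x) -> RInt f a b = RInt g a b.
Proof. intros. exact (RInt_ext (V:=R_CompleteNormedModule) f g a b H). Qed.

Definition Mat := nat -> nat -> Cx.
Definition mmul (A B : Mat) : Mat := fun i j =>
  Cadd (Cmul (A i 0%nat) (B 0%nat j)) (Cmul (A i 1%nat) (B 1%nat j)).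
Definition Tm (z : Cx) (s th : R) : Mat := fun i j =>
  Csub (delta i j) (Cmul (Cmul z (RtoC s)) (RtoC (JHmat th i j))).

Lemma JH_sq th p q : (p < 2)%nat -> (q < 2)%nat ->
  JHmat th p 0 * JHmat th 0 q + JHmat th p 1 * JHmat th 1 q = 0.
Proof.
  intros Hp Hq; destruct p as [|[|]]; try lia; destruct q as [|[|]]; try lia;
  unfold JHmat, Jmat, Hmat; ring.
Qed.

Lemma alg1 (a b r s r' s' : R) (w : Cx) :
  Cadd (Cmul (RtoC a) (Copp (Cmul w (r, s)))) (Cmul (RtoC b) (Copp (Cmul w (r', s')))) =
  Copp (Cmul w (a * r + b * r', a * s + b * s')).
Proof. cx; ring. Qed.

Ltac cxn := apply Cx_eq; unfold Cadd, Cmul, Copp, Csub, RtoC, Re, Im; simpl.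

Section PartA.
Variables (N : nat) (ell th : nat -> R) (L : option R) (z : Cx)
  (U : R -> nat -> nat -> Cx).
Hypothesis HIE : solves_IE N ell th L z U.

Definition fR (i j : nat) (t : R) : R :=
  JHam N ell th t i 0 * Re (U t 0%nat j) + JHam N ell th t i 1 * Re (U t 1%nat j).
Definition fI (i j : nat) (t : R) : R :=
  JHam N ell th t i 0 * Im (U t 0%nat j) + JHam N ell th t i 1 * Im (U t 1%nat j).

Lemma IE' x i j : in_dom L x -> (i < 2)%nat -> (j < 2)%nat ->
  ex_RInt (fR i j) 0 x /\ ex_RInt (fI i j) 0 x /\
  U x i j = Cadd (delta i j) (Copp (Cmul z (RInt (fR i j) 0 x, RInt (fI i j) 0 x))).
Proof.
  intros Hx Hi Hj. destruct (HIE x Hx i j Hi Hj) as [pre [pim E]].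
  split; [|split].
  - apply ex_RInt_Reals_1; exact pre.
  - apply ex_RInt_Reals_1; exact pim.
  - rewrite E. rewrite (RInt_Reals (fR i j) _ _ pre), (RInt_Reals (fI i j) _ _ pim). reflexivity.
Qed.

Lemma diffIE y x i j : in_dom L y -> in_dom L x -> y <= x -> (i < 2)%nat -> (j < 2)%nat ->
  ex_RInt (fR i j) y x /\ ex_RInt (fI i j) y x /\
  Csub (U x i j) (U y i j) = Copp (Cmul z (RInt (fR i j) y x, RInt (fI i j) y x)).
Proof.
  intros Hy Hx Hyx Hi Hj.
  destruct (IE' x i j Hx Hi Hj) as [Rx [Ix Ex]].
  destruct (IE' y i j Hy Hi Hj) as [Ry [Iy Ey]].
  assert (Hy0 : 0 <= y) by (destruct Hy; auto).
  assert (R1 : ex_RInt (fR i j) y x) by (apply exR_2 with 0; auto; lra).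
  assert (I1 : ex_RInt (fI i j) y x) by (apply exR_2 with 0; auto; lra).
  split; [|split]; auto.
  rewrite Ex, Ey.
  rewrite <- (RChasles (fR i j) 0 y x Ry R1).
  rewrite <- (RChasles (fI i j) 0 y x Iy I1).
  set (a := RInt (fR i j) 0 y). set (b := RInt (fI i j) 0 y).
  set (c := RInt (fR i j) y x). set (d := RInt (fI i j) y x).
  clearbody a b c d.
  change (a + c, b + d) with (Cadd (a, b) (c, d)). unfold Csub. ring.
Qed.

Definition Kv (M : nat -> nat -> R) (p j : nat) (t : R) : Cx :=
  Cadd (Cmul (RtoC (M p 0%nat)) (U t 0%nat j)) (Cmul (RtoC (M p 1%nat)) (U t 1%nat j)).

Lemma in_dom_mid y t x : in_dom L y -> in_dom L x -> y <= t <= x -> in_dom L t.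
Proof.
  unfold in_dom; destruct L; intros [H1 H2] [H3 H4] H5; split; try lra; auto.
Qed.

Lemma step1 y t th0 : in_dom L y -> in_dom L t -> y <= t ->
  (forall u, y < u < t -> th (idx N ell u) = th0) ->
  forall p j, (p < 2)%nat -> (j < 2)%nat -> Kv (JHmat th0) p j t = Kv (JHmat th0) p j y.
Proof.
  intros Hy Ht Hyt Hc p j Hp Hj.
  destruct (diffIE y t 0 j Hy Ht Hyt ltac:(lia) Hj) as [R0 [I0 E0]].
  destruct (diffIE y t 1 j Hy Ht Hyt ltac:(lia) Hj) as [R1 [I1 E1]].
  set (M := JHmat th0).
  assert (D : Csub (Kv M p j t) (Kv M p j y) =
     Cadd (Cmul (RtoC (M p 0%nat)) (Csub (U t 0%nat j) (U y 0%nat j)))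
          (Cmul (RtoC (M p 1%nat)) (Csub (U t 1%nat j) (U y 1%nat j)))).
  { unfold Kv, Csub. ring. }
  rewrite E0, E1, alg1 in D.
  assert (Z1 : forall g : nat -> nat -> R -> R, ex_RInt (g 0%nat j) y t -> ex_RInt (g 1%nat j) y t ->
     (forall u, y < u < t -> M p 0%nat * g 0%nat j u + M p 1%nat * g 1%nat j u = 0) ->
     M p 0%nat * RInt (g 0%nat j) y t + M p 1%nat * RInt (g 1%nat j) y t = 0).
  { intros g G0 G1 Hg. rewrite <- RInt_lin2 by auto.
    rewrite (RInt_extR _ (fun _ => 0)). rewrite RInt_cst; ring.
    intros u Hu. rewrite Rmin_left in Hu by lra. rewrite Rmax_right in Hu by lra. apply Hg; auto. }
  rewrite (Z1 fR), (Z1 fI) in D; auto.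
  - assert (Kv M p j t = Cadd (Csub (Kv M p j t) (Kv M p j y)) (Kv M p j y)) by (unfold Csub; ring).
    rewrite H, D. cxn; ring.
  - intros u Hu. unfold fI, JHam. rewrite (Hc u Hu). fold M.
    pose proof (JH_sq th0 p 0 Hp ltac:(lia)). pose proof (JH_sq th0 p 1 Hp ltac:(lia)). fold M in H, H0.
    transitivity ((M p 0%nat * M 0%nat 0%nat + M p 1%nat * M 1%nat 0%nat) * Im (U u 0%nat j) +
                  (M p 0%nat * M 0%nat 1%nat + M p 1%nat * M 1%nat 1%nat) * Im (U u 1%nat j)); [ring|].
    rewrite H, H0; ring.
  - intros u Hu. unfold fR, JHam. rewrite (Hc u Hu). fold M.
    pose proof (JH_sq th0 p 0 Hp ltac:(lia)). pose proof (JH_sq th0 p 1 Hp ltac:(lia)). fold M in H, H0.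
    transitivity ((M p 0%nat * M 0%nat 0%nat + M p 1%nat * M 1%nat 0%nat) * Re (U u 0%nat j) +
                  (M p 0%nat * M 0%nat 1%nat + M p 1%nat * M 1%nat 1%nat) * Re (U u 1%nat j)); [ring|].
    rewrite H, H0; ring.
Qed.

Lemma seg y x th0 : in_dom L y -> in_dom L x -> y <= x ->
  (forall u, y < u < x -> th (idx N ell u) = th0) ->
  forall i j, (i < 2)%nat -> (j < 2)%nat -> U x i j = mmul (Tm z (x - y) th0) (U y) i j.
Proof.
  intros Hy Hx Hyx Hc i j Hi Hj.
  destruct (diffIE y x i j Hy Hx Hyx Hi Hj) as [R0 [I0 E0]].
  set (M := JHmat th0).
  assert (F : forall u, y < u < x -> fR i j u = Re (Kv M i j y) /\ fI i j u = Im (Kv M i j y)).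
  { intros u Hu. assert (Hu' : in_dom L u) by (apply in_dom_mid with y x; auto; lra).
    rewrite <- (step1 y u th0 Hy Hu' ltac:(lra)) by (auto; intros; apply Hc; lra).
    unfold fR, fI, JHam. rewrite (Hc u Hu). fold M. unfold Kv, Cmul, Cadd, RtoC, Re, Im; simpl.
    split; ring. }
  rewrite (RInt_extR (fR i j) (fun _ => Re (Kv M i j y))) in E0.
  2:{ intros u Hu. rewrite Rmin_left in Hu by lra. rewrite Rmax_right in Hu by lra. apply F; auto. }
  rewrite (RInt_extR (fI i j) (fun _ => Im (Kv M i j y))) in E0.
  2:{ intros u Hu. rewrite Rmin_left in Hu by lra. rewrite Rmax_right in Hu by lra. apply F; auto. }
  rewrite !RInt_cst in E0.
  assert (U x i j = Cadd (Csub (U x i j) (U y i j)) (U y i j)) by (unfold Csub; ring).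
  rewrite H, E0. clear H E0 F.
  unfold mmul, Tm, Kv. fold M.
  destruct i as [|[|]]; try lia; unfold delta; simpl Nat.eqb; cbv iota;
  set (w0 := U y 0%nat j); set (w1 := U y 1%nat j); clearbody w0 w1; cxn; ring.
Qed.
End PartA.

Open Scope R_scope.

Section PartA2.
Variables (N : nat) (ell th : nat -> R) (L : option R) (z : Cx)
  (U : R -> nat -> nat -> Cx).
Hypothesis HIE : solves_IE N ell th L z U.
Hypothesis Hell : forall k, (k < N)%nat -> 0 < ell k.
Hypothesis HL : match L with Some L0 => X ell N < L0 | None => True end.

Lemma X_mono a b : (a <= b <= N)%nat -> X ell a <= X ell b.
Proof.
  intros [H1 H2]. induction b.
  - assert (a = 0%nat) by lia. subst; lra.
  - destruct (Nat.eq_dec a (S b)). subst; lra.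
    simpl. pose proof (Hell b ltac:(lia)). specialize (IHb ltac:(lia) ltac:(lia)). lra.
Qed.

Lemma idx_k k t : (k <= N)%nat -> X ell k <= t -> ((k < N)%nat -> t < X ell (S k)) ->
  idx N ell t = k.
Proof.
  intros Hk H1 H2. unfold idx.
  assert (forall n, (n <= N)%nat -> idx_aux ell t n = Nat.min n k).
  { induction n; intros Hn; [simpl; lia|].
    change (idx_aux ell t (S n)) with (idx_aux ell t n + (if Rle_dec (X ell (S n)) t then 1 else 0))%nat.
    rewrite IHn by lia. destruct (Rle_dec (X ell (S n)) t).
    - destruct (Nat.le_gt_cases (S n) k). lia.
      exfalso. pose proof (X_mono (S k) (S n) ltac:(lia)). specialize (H2 ltac:(lia)). simpl in *. lra.
    - destruct (Nat.le_gt_cases (S n) k). exfalso. pose proof (X_mono (S n) k ltac:(lia)). lra. lia. }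
  rewrite H by lia. lia.
Qed.

Lemma dom_X k : (k <= N)%nat -> in_dom L (X ell k).
Proof.
  intros Hk. pose proof (X_mono 0 k ltac:(lia)). pose proof (X_mono k N ltac:(lia)).
  simpl in H. unfold in_dom. destruct L; split; auto; lra.
Qed.

Fixpoint Vm (k : nat) : Mat :=
  match k with 0%nat => delta | S k' => mmul (Tm z (ell k') (th k')) (Vm k') end.

Lemma U_X k : (k <= N)%nat -> forall i j, (i < 2)%nat -> (j < 2)%nat -> U (X ell k) i j = Vm k i j.
Proof.
  induction k; intros Hk i j Hi Hj.
  - destruct (IE' N ell th L z U HIE 0 i j (dom_X 0 ltac:(lia)) Hi Hj) as [_ [_ E]].
    simpl X. rewrite E. rewrite !(RInt_point (V:=R_CompleteNormedModule)). simpl Vm.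
    change (@zero (CompleteNormedModule.AbelianMonoid R_AbsRing R_CompleteNormedModule)) with 0.
    cxn; ring.
  - assert (E := seg N ell th L z U HIE (X ell k) (X ell (S k)) (th k) (dom_X k ltac:(lia))
      (dom_X (S k) Hk) (X_mono k (S k) ltac:(lia))).
    rewrite E; auto.
    + simpl X. replace (X ell k + ell k - X ell k) with (ell k) by ring. simpl Vm.
      unfold mmul. rewrite !IHk by lia. reflexivity.
    + intros u Hu. f_equal. apply idx_k; try lia; lra.
Qed.

Lemma U_last x : in_dom L x -> X ell N <= x ->
  forall i j, (i < 2)%nat -> (j < 2)%nat -> U x i j = mmul (Tm z (x - X ell N) (th N)) (Vm N) i j.
Proof.
  intros Hx HxN i j Hi Hj.
  rewrite (seg N ell th L z U HIE (X ell N) x (th N) (dom_X N ltac:(lia)) Hx HxN); auto.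
  - unfold mmul. rewrite !U_X by lia. reflexivity.
  - intros u Hu. f_equal. apply idx_k; try lia; lra.
Qed.
End PartA2.

Open Scope R_scope.

Definition rv (w : Cx * Cx) (T : Mat) : Cx * Cx :=
  (Cadd (Cmul (fst w) (T 0%nat 0%nat)) (Cmul (snd w) (T 1%nat 0%nat)),
   Cadd (Cmul (fst w) (T 0%nat 1%nat)) (Cmul (snd w) (T 1%nat 1%nat))).

Lemma rv_mmul w A B : rv w (mmul A B) = rv (rv w A) B.
Proof. destruct w; unfold rv, mmul; simpl; f_equal; ring. Qed.

Lemma rv_delta w : rv w delta = w.
Proof. destruct w; unfold rv, delta; simpl; f_equal; cx; ring. Qed.

Lemma JH_vals th : JHmat th 0 0 = cos th * sin th /\ JHmat th 0 1 = sin th ^ 2 /\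
  JHmat th 1 0 = - (cos th ^ 2) /\ JHmat th 1 1 = - (cos th * sin th).
Proof. unfold JHmat, Jmat, Hmat; repeat split; ring. Qed.

Lemma rv_Tm A B z l th :
  rv (A, B) (Tm z l th) =
  (Cadd (Cmul A (Csub Co (Cmul (Cmul (Cmul z (RtoC l)) (RtoC (cos th))) (RtoC (sin th)))))
        (Cmul B (Cmul (Cmul (Cmul z (RtoC l)) (RtoC (cos th))) (RtoC (cos th)))),
   Cadd (Cmul A (Copp (Cmul (Cmul (Cmul z (RtoC l)) (RtoC (sin th))) (RtoC (sin th)))))
        (Cmul B (Cadd Co (Cmul (Cmul (Cmul z (RtoC l)) (RtoC (cos th))) (RtoC (sin th)))))).
Proof.
  destruct (JH_vals th) as [E1 [E2 [E3 E4]]].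
  unfold rv, Tm, delta; simpl. rewrite E1, E2, E3, E4. f_equal; cx; ring.
Qed.

Lemma rv_Tm_pi A B z l th : sin th = 0 -> cos th ^ 2 = 1 ->
  rv (A, B) (Tm z l th) = (Cadd A (Cmul (Cmul z (RtoC l)) B), B).
Proof.
  intros Hs Hc. rewrite rv_Tm. rewrite Hs.
  assert (H : cos th = 1 \/ cos th = -1) by nra.
  destruct H as [H|H]; rewrite H; f_equal; cx; ring.
Qed.

Lemma step_alg (z D B : Cx) (l th : R) : sin th <> 0 ->
  let E := Csub D (RtoC (cot th)) in
  let F := Cadd (Cmul (RtoC (- (l * sin th ^ 2))) z) (Cinv E) in
  E <> Cz -> F <> Cz ->
  snd (rv (Cmul D B, B) (Tm z l th)) = Cmul (Cmul B E) F /\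
  fst (rv (Cmul D B, B) (Tm z l th)) =
    Cmul (Cadd (RtoC (cot th)) (Cinv F)) (snd (rv (Cmul D B, B) (Tm z l th))).
Proof.
  intros Hs E F HE HF. rewrite rv_Tm. simpl fst; simpl snd.
  assert (Hc : cos th = cot th * sin th) by (unfold cot; field; auto).
  rewrite Hc. unfold F in *. unfold E in *. clear E F.
  replace (l * sin th ^ 2) with (l * sin th * sin th) in * by ring.
  rewrite !RtoC_mul, RtoC_opp, !RtoC_mul in *. simpl in *.
  set (k := RtoC (cot th)) in *. set (s := RtoC (sin th)) in *. set (ll := RtoC l) in *.
  clearbody k s ll.
  split.
  - field. auto.
  - field. split; auto. intro H0; apply (Cmul_nz _ _ HF HE). rewrite <- H0.
    change (R1, R0) with Co. field. auto.
Qed.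

Definition Inv (z g : Cx) := g = Cz \/ 0 < Im g * Im z.

Lemma Im_inv_sign (a : Cx) (iz : R) : a <> Cz ->
  Im (Cinv a) * iz = - (Im a * iz) * / (Re a ^ 2 + Im a ^ 2).
Proof. intros. rewrite Im_Cinv. unfold Rdiv. ring. Qed.

Lemma inv_step (z G' : Cx) (om ups l : R) : Im z <> 0 -> Inv z G' -> 0 <= ups ->
  (ups = 0 -> G' = Cz -> om <> 0) -> 0 < l ->
  let E := Cadd (Cadd (RtoC om) (Cmul (RtoC ups) z)) G' in
  let F := Cadd (Cmul (RtoC (-l)) z) (Cinv E) in
  E <> Cz /\ F <> Cz /\ 0 < Im (Cinv F) * Im z.
Proof.
  intros Hz HG Hu Hom Hl E F.
  assert (ImE : Im E = ups * Im z + Im G').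
  { unfold E, Cadd, Cmul, RtoC, Im, Re; simpl. ring. }
  assert (Hiz : 0 < Im z * Im z) by (apply Rsqr_pos_lt in Hz; unfold Rsqr in Hz; lra).
  assert (HE : E <> Cz /\ 0 <= Im E * Im z).
  { destruct HG as [HG|HG].
    - destruct (Req_dec ups 0) as [Hu0|Hu0].
      + split.
        * intro EE. apply (Hom Hu0 HG). assert (Re E = 0) by (rewrite EE; reflexivity).
          unfold E in H. rewrite HG, Hu0 in H. unfold Re, Cadd, Cmul, RtoC in H; simpl in H. lra.
        * rewrite ImE, HG, Hu0. unfold Im, RtoC; simpl. lra.
      + assert (0 < Im E * Im z) by (rewrite ImE, HG; unfold Im at 2, RtoC; simpl; nra).
        split; [apply Im_nz; intro; nra | lra].
    - assert (0 < Im E * Im z) by (rewrite ImE; nra).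
      split; [apply Im_nz; intro; nra | lra]. }
  destruct HE as [HE HEz].
  assert (HiE : Im (Cinv E) * Im z <= 0).
  { rewrite Im_inv_sign by auto. pose proof (Cnz_norm_pos E HE).
    pose proof (Rinv_0_lt_compat _ H). nra. }
  assert (ImF : Im F * Im z < 0).
  { unfold F. rewrite Im_add, Im_Rmul. nra. }
  assert (HF : F <> Cz) by (apply Im_nz; intro; nra).
  split; [auto|split; auto].
  rewrite Im_inv_sign by auto. pose proof (Cnz_norm_pos F HF).
  pose proof (Rinv_0_lt_compat _ H). nra.
Qed.

Open Scope R_scope.

Section Comb.
Variables (N : nat) (th : nat -> R).
Hypothesis Hth0 : th 0%nat = PI / 2.
Hypothesis Hth : forall k, (k < N)%nat -> th k < th (S k) < th k + PI.
Hypothesis HthN : ~ in_piZ (th N).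

Definition bb k := notpiZb (th k).
Definition cc n := cnt_from th 0 n.

Lemma cc_S n : cc (S n) = (cc n + bb n)%nat.
Proof. reflexivity. Qed.

Lemma bb_cases k : (bb k = 1%nat /\ ~ in_piZ (th k)) \/ (bb k = 0%nat /\ in_piZ (th k)).
Proof.
  unfold bb, notpiZb. destruct (excluded_middle_informative (in_piZ (th k))); auto.
Qed.

Lemma cc_mono a b : (a <= b)%nat -> (cc a <= cc b)%nat.
Proof.
  intros H; induction H; auto. rewrite cc_S. lia.
Qed.

Lemma cnt_shift n : cnt_from th 0 (S n) = (bb 0 + cnt_from th 1 n)%nat.
Proof.
  induction n. simpl; unfold bb; lia.
  change (cnt_from th 0 (S (S n))) with (cnt_from th 0 (S n) + notpiZb (th (S n)))%nat.
  rewrite IHn. simpl. unfold bb. lia.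
Qed.

Lemma bb0 : bb 0 = 1%nat.
Proof.
  destruct (bb_cases 0) as [[H _]|[_ [n Hn]]]; auto.
  exfalso. rewrite Hth0 in Hn. pose proof PI_RGT_0.
  assert (IZR n = / 2) by (apply Rmult_eq_reg_r with PI; [|lra]; field_simplify; lra).
  assert (IZR (2 * n) = 1) by (rewrite mult_IZR; rewrite H0; field).
  apply eq_IZR in H1. lia.
Qed.

Lemma bbN : bb N = 1%nat.
Proof. destruct (bb_cases N) as [[H _]|[_ H]]; auto. contradiction. Qed.

Lemma no_two_zeros k : (k < N)%nat -> bb k = 0%nat -> bb (S k) = 1%nat.
Proof.
  intros Hk H0. destruct (bb_cases k) as [[H _]|[_ [a Ha]]]; [lia|].
  destruct (bb_cases (S k)) as [[H _]|[_ [b Hb]]]; auto.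
  exfalso. destruct (Hth k Hk) as [H1 H2]. rewrite Ha, Hb in *. pose proof PI_RGT_0.
  assert (IZR a < IZR b) by (apply Rmult_lt_reg_r with PI; auto).
  assert (IZR b < IZR a + 1) by (apply Rmult_lt_reg_r with PI; auto; lra).
  apply lt_IZR in H3. rewrite <- plus_IZR in H4. apply lt_IZR in H4. lia.
Qed.

Lemma kappa_cc : kappa N th = cc N.
Proof.
  unfold kappa. pose proof (cnt_shift N). rewrite bb0 in H. fold (cc (S N)) in H.
  rewrite cc_S, bbN in H. lia.
Qed.

Lemma kjB j n : (j <= cc n)%nat ->
  cc (kj_aux th j n) = j /\ (kj_aux th j n <= n)%nat /\
  forall m, (kj_aux th j n < m <= n)%nat -> cc m <> j.
Proof.
  induction n; intros Hj.
  - simpl. unfold cc in *; simpl in *. split; [lia|split; [lia|]]. intros; lia.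
  - change (kj_aux th j (S n)) with (if Nat.eqb (cc (S n)) j then S n else kj_aux th j n). destruct (Nat.eqb_spec (cc (S n)) j).
    + split; auto. split; auto. intros; lia.
    + rewrite cc_S in Hj, n0. destruct (bb_cases n) as [[H _]|[H _]]; rewrite H in *.
      * destruct (IHn ltac:(lia)) as [A [B C]]. split; auto. split; [lia|].
        intros m Hm. destruct (Nat.eq_dec m (S n)). subst. rewrite cc_S, H. lia. apply C; lia.
      * destruct (IHn ltac:(lia)) as [A [B C]]. split; auto. split; [lia|].
        intros m Hm. destruct (Nat.eq_dec m (S n)). subst. rewrite cc_S, H. lia. apply C; lia.
Qed.

Lemma kj_props j : (j <= kappa N th)%nat ->
  cc (kj N th j) = j /\ (kj N th j <= N)%nat /\
  forall m, (kj N th j < m <= N)%nat -> cc m <> j.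
Proof. intros. apply kjB. rewrite <- kappa_cc. auto. Qed.

Lemma kj_notpi j : (j <= kappa N th)%nat -> ~ in_piZ (th (kj N th j)).
Proof.
  intros Hj. destruct (kj_props j Hj) as [A [B C]].
  destruct (Nat.eq_dec (kj N th j) N) as [E|E]. rewrite E; auto.
  destruct (bb_cases (kj N th j)) as [[H H']|[H _]]; auto.
  exfalso. apply (C (S (kj N th j))). lia. rewrite cc_S, H. lia.
Qed.

Lemma kj_kappa : kj N th (kappa N th) = N.
Proof.
  destruct (kj_props (kappa N th) ltac:(lia)) as [A [B C]].
  destruct (Nat.eq_dec (kj N th (kappa N th)) N); auto.
  exfalso. apply (C N). lia. symmetry; apply kappa_cc.
Qed.

Lemma kj_0 : kj N th 0 = 0%nat.
Proof.
  destruct (kj_props 0 ltac:(lia)) as [A [B C]].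
  destruct (kj N th 0) eqn:E; auto. exfalso.
  pose proof (cc_mono 1 (S n) ltac:(lia)). rewrite cc_S in H. unfold cc at 1 in H; simpl in H.
  rewrite bb0 in H. lia.
Qed.

Lemma kj_step j : (j < kappa N th)%nat ->
  (kj N th j < N)%nat /\
  (kj N th (S j) = S (kj N th j) \/
   (kj N th (S j) = S (S (kj N th j)) /\ in_piZ (th (S (kj N th j))))).
Proof.
  intros Hj. destruct (kj_props j ltac:(lia)) as [A [B C]].
  destruct (kj_props (S j) ltac:(lia)) as [A' [B' C']].
  set (k := kj N th j) in *. set (k' := kj N th (S j)) in *.
  assert (Hk : (k < N)%nat).
  { destruct (Nat.eq_dec k N); [|lia]. exfalso. rewrite e in A. rewrite kappa_cc in Hj. lia. }
  split; auto.
  assert (Hb : bb k = 1%nat).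
  { destruct (bb_cases k) as [[H _]|[H _]]; auto. exfalso. apply (C (S k)). lia. rewrite cc_S, H. lia. }
  assert (Hc1 : cc (S k) = S j) by (rewrite cc_S, Hb; lia).
  assert (H1 : (S k <= k')%nat).
  { destruct (Nat.le_gt_cases (S k) k'); auto. exfalso. apply (C' (S k)). lia. auto. }
  destruct (Nat.eq_dec k' (S k)); [left; auto|right].
  assert (H2 : bb (S k) = 0%nat).
  { pose proof (cc_mono (S (S k)) k' ltac:(lia)). rewrite cc_S, Hc1 in H. lia. }
  destruct (Nat.eq_dec k' (S (S k))).
  - split; auto. destruct (bb_cases (S k)) as [[H _]|[_ H]]; auto. lia.
  - exfalso. assert (S k < N)%nat by lia.
    pose proof (no_two_zeros (S k) H H2).
    pose proof (cc_mono (S (S (S k))) k' ltac:(lia)). rewrite (cc_S (S (S k))), (cc_S (S k)), Hc1, H2, H0 in H3. lia.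
Qed.
End Comb.

Open Scope R_scope.

Lemma sin_nz_of t : ~ in_piZ t -> sin t <> 0.
Proof. intros H E. apply H. apply sin_eq_0_0 in E. exact E. Qed.

Lemma sin_pi t : in_piZ t -> sin t = 0 /\ cos t ^ 2 = 1.
Proof.
  intros H. assert (sin t = 0) by (apply sin_eq_0_1; exact H).
  split; auto. pose proof (sin2_cos2 t). unfold Rsqr in H1. rewrite H0 in H1. lra.
Qed.

Lemma cot_neq t1 t2 : t1 < t2 < t1 + PI -> sin t1 <> 0 -> sin t2 <> 0 -> cot t2 - cot t1 <> 0.
Proof.
  intros [H1 H2] S1 S2 E. unfold cot in E.
  assert (cos t2 * sin t1 - cos t1 * sin t2 = 0).
  { apply Rmult_eq_reg_r with (/ (sin t1 * sin t2)).
    2:{ apply Rinv_neq_0_compat. apply Rmult_integral_contrapositive; auto. }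
    rewrite Rmult_0_l. rewrite <- E. field. auto. }
  assert (0 < sin (t2 - t1)) by (apply sin_gt_0; lra).
  rewrite sin_minus in H0. lra.
Qed.

Section Chain.
Variables (N : nat) (ell th : nat -> R) (L : option R) (z : Cx).
Hypothesis Hth0 : th 0%nat = PI / 2.
Hypothesis Hell : forall k, (k < N)%nat -> 0 < ell k.
Hypothesis Hth : forall k, (k < N)%nat -> th k < th (S k) < th k + PI.
Hypothesis HthN : ~ in_piZ (th N).
Hypothesis Hz : Im z <> 0.

Fixpoint Wd (w : Cx * Cx) (d : nat) : Cx * Cx :=
  match d with
  | 0%nat => w
  | S d' => rv (Wd w d') (Tm z (ell (N - d)) (th (N - d)))
  end.

Lemma rv_V w : rv w (Vm ell th z N) = Wd w N.
Proof.
  assert (forall d, (d <= N)%nat -> rv (Wd w d) (Vm ell th z (N - d)) = rv w (Vm ell th z N)).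
  { induction d; intros Hd. rewrite Nat.sub_0_r. reflexivity.
    simpl Wd. rewrite <- rv_mmul.
    replace (N - d)%nat with (S (N - S d)) in IHd by lia. rewrite <- IHd by lia.
    reflexivity. }
  specialize (H N (le_n N)). rewrite Nat.sub_diag in H. simpl Vm in H. rewrite rv_delta in H. auto.
Qed.

Lemma W_step w k : (k < N)%nat -> Wd w (N - k) = rv (Wd w (N - S k)) (Tm z (ell k) (th k)).
Proof.
  intros Hk. replace (N - k)%nat with (S (N - S k)) by lia. simpl Wd.
  replace (N - S (N - S k))%nat with k by lia. reflexivity.
Qed.

Definition lzf (j : nat) : Cx :=
  match lj N ell th L j with Some a => Cmul (RtoC (- a)) z | None => RtoC 0 end.

Fixpoint cfg (n j : nat) (g : Cx) : Cx :=
  match n with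
  | 0%nat => g
  | S n' => Cinv (Cadd (lzf j)
      (Cinv (Cadd (Cadd (RtoC (omegaj N th j)) (Cmul (RtoC (upsj N ell th j)) z))
                  (cfg n' (S j) g))))
  end.

Lemma cfrac_cfg n j : cfrac N ell th L z n j = cfg n j (inv_mlz (lj N ell th L (j + n)) z).
Proof.
  revert j; induction n; intros j.
  - simpl. rewrite Nat.add_0_r. reflexivity.
  - simpl. rewrite IHn. replace (S j + n)%nat with (j + S n)%nat by lia. reflexivity.
Qed.

Lemma chain w g : snd w <> Cz -> fst w = Cmul (Cadd (RtoC (cot (th N))) g) (snd w) -> Inv z g ->
  forall n, (n <= kappa N th)%nat ->
  snd (Wd w (N - kj N th (kappa N th - n))) <> Cz /\
  fst (Wd w (N - kj N th (kappa N th - n))) =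
    Cmul (Cadd (RtoC (cot (th (kj N th (kappa N th - n))))) (cfg n (kappa N th - n) g))
         (snd (Wd w (N - kj N th (kappa N th - n)))) /\
  Inv z (cfg n (kappa N th - n) g).
Proof.
  intros Hw1 Hw2 Hg n. induction n; intros Hn.
  - rewrite Nat.sub_0_r. rewrite (kj_kappa N th Hth0 HthN), Nat.sub_diag. simpl. auto.
  - specialize (IHn ltac:(lia)).
    set (j := (kappa N th - S n)%nat) in *.
    replace (kappa N th - n)%nat with (S j) in IHn by lia.
    destruct (kj_step N th Hth0 Hth HthN j ltac:(lia)) as [Hk Hcase].
    set (k := kj N th j) in *. set (k' := kj N th (S j)) in *.
    destruct IHn as [HB [HA HG]].
    set (G' := cfg n (S j) g) in *.
    destruct (Wd w (N - k')) as [A' B'] eqn:EW. simpl fst in *; simpl snd in *.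
    set (D := Cadd (Cadd (RtoC (cot (th k'))) (Cmul (RtoC (upsj N ell th j)) z)) G').
    assert (HS : Wd w (N - S k) = (Cmul D B', B') /\
                 0 <= upsj N ell th j /\ (upsj N ell th j = 0 -> omegaj N th j <> 0)).
    { destruct Hcase as [Hc|[Hc Hpi]].
      - assert (Hups : upsj N ell th j = 0).
        { unfold upsj. fold k k'. replace (k' - k)%nat with 1%nat by lia. reflexivity. }
        rewrite Hups. unfold D. rewrite Hups. unfold omegaj. fold k k'.
        rewrite <- Hc. rewrite EW.
        split; [|split; [lra|]].
        + f_equal. rewrite HA. ring.
        + intros _. apply cot_neq; [rewrite Hc; apply Hth; auto | apply sin_nz_of | apply sin_nz_of].
          apply (kj_notpi N th Hth0 HthN); lia.
          apply (kj_notpi N th Hth0 HthN); lia.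
      - assert (Hups : upsj N ell th j = ell (S k)).
        { unfold upsj. fold k k'. replace (k' - k)%nat with 2%nat by lia. reflexivity. }
        assert (Hl : 0 < ell (S k)).
        { apply Hell. destruct (kj_props N th Hth0 HthN (S j) ltac:(lia)) as [_ [B _]]. fold k' in B. lia. }
        rewrite Hups. unfold D. rewrite Hups.
        split; [|split; [lra|intros; lra]].
        rewrite W_step by (destruct (kj_props N th Hth0 HthN (S j) ltac:(lia)) as [_ [B _]]; fold k' in B; lia).
        rewrite <- Hc. rewrite EW. destruct (sin_pi _ Hpi) as [S0 C1].
        rewrite rv_Tm_pi by auto. f_equal. rewrite HA. ring. }
    destruct HS as [HS [Hu Hom]].
    assert (Hsk : sin (th k) <> 0) by (apply sin_nz_of; apply (kj_notpi N th Hth0 HthN); lia).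
    assert (Hl : 0 < ell k * sin (th k) ^ 2).
    { apply Rmult_lt_0_compat; auto. simpl. rewrite Rmult_1_r. apply Rsqr_pos_lt in Hsk; exact Hsk. }
    destruct (inv_step z G' (omegaj N th j) (upsj N ell th j) (ell k * sin (th k) ^ 2) Hz HG Hu
      (fun h _ => Hom h) Hl) as [HE [HF HGs]].
    assert (Eeq : Cadd (Cadd (RtoC (omegaj N th j)) (Cmul (RtoC (upsj N ell th j)) z)) G' =
                  Csub D (RtoC (cot (th k)))).
    { unfold omegaj. fold k k'. rewrite RtoC_sub. unfold D. unfold Csub. ring. }
    pose proof (step_alg z D B' (ell k) (th k) Hsk) as ST. cbv zeta in ST.
    rewrite <- Eeq in ST.
    destruct (ST HE HF) as [ST1 ST2].
    assert (Hlz : lzf j = Cmul (RtoC (- (ell k * sin (th k) ^ 2))) z).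
    { unfold lzf, lj, ellx. fold k. destruct (Nat.ltb_spec k N); [reflexivity | lia]. }
    rewrite W_step by auto. rewrite HS.
    change (cfg (S n) j g) with (Cinv (Cadd (lzf j)
      (Cinv (Cadd (Cadd (RtoC (omegaj N th j)) (Cmul (RtoC (upsj N ell th j)) z)) G')))).
    rewrite Hlz.
    split; [|split].
    - rewrite ST1. apply Cmul_nz; auto. apply Cmul_nz; auto.
    - exact ST2.
    - right. exact HGs.
Qed.
End Chain.

Open Scope R_scope.

Lemma Cnorm_ge0 a : 0 <= Cnorm a.
Proof. apply sqrt_pos. Qed.

Lemma Cnorm_mul a b : Cnorm (Cmul a b) = Cnorm a * Cnorm b.
Proof.
  unfold Cnorm. rewrite <- sqrt_mult by (apply Rplus_le_le_0_compat; apply pow2_ge_0).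
  f_equal. destruct a, b; unfold Cmul, Re, Im; simpl; ring.
Qed.

Lemma Cnorm_pos a : a <> Cz -> 0 < Cnorm a.
Proof. intros H. apply sqrt_lt_R0. apply Cnz_norm_pos; auto. Qed.

Lemma Cnorm_inv a : a <> Cz -> Cnorm (Cinv a) = / Cnorm a.
Proof.
  intros H. pose proof (Cnorm_pos a H).
  assert (E : Cmul a (Cinv a) = Co) by (field; auto).
  assert (Cnorm a * Cnorm (Cinv a) = 1).
  { rewrite <- Cnorm_mul, E. unfold Cnorm, RtoC, Re, Im; simpl.
    replace (1 * (1 * 1) + 0 * (0 * 1)) with 1 by ring. apply sqrt_1. }
  apply Rmult_eq_reg_l with (Cnorm a); [|lra]. rewrite H1. field. lra.
Qed.

Lemma Cnorm_RtoC r : Cnorm (RtoC r) = Rabs r.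
Proof.
  unfold Cnorm, RtoC, Re, Im; simpl. replace (r * (r * 1) + 0 * (0 * 1)) with (r * r) by ring.
  apply sqrt_Rsqr_abs.
Qed.

Lemma Cnorm_opp a : Cnorm (Copp a) = Cnorm a.
Proof. unfold Cnorm, Copp, Re, Im; simpl. f_equal; ring. Qed.

Lemma Cnorm_add a b : Cnorm (Cadd a b) <= Cnorm a + Cnorm b.
Proof.
  destruct a as [x y], b as [u v]. unfold Cnorm, Cadd, Re, Im; simpl.
  set (p := sqrt (x * (x * 1) + y * (y * 1))). set (q := sqrt (u * (u * 1) + v * (v * 1))).
  assert (Hp : 0 <= p) by apply sqrt_pos. assert (Hq : 0 <= q) by apply sqrt_pos.
  assert (Ep : p * p = x * x + y * y) by (unfold p; rewrite sqrt_sqrt; [ring | pose proof (Rle_0_sqr x); pose proof (Rle_0_sqr y); unfold Rsqr in *; lra]).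
  assert (Eq : q * q = u * u + v * v) by (unfold q; rewrite sqrt_sqrt; [ring | pose proof (Rle_0_sqr u); pose proof (Rle_0_sqr v); unfold Rsqr in *; lra]).
  assert (CS : x * u + y * v <= p * q).
  { assert ((x * u + y * v) * (x * u + y * v) <= (p * q) * (p * q)).
    { replace ((p * q) * (p * q)) with ((p * p) * (q * q)) by ring. rewrite Ep, Eq. pose proof (Rle_0_sqr (x * v - y * u)); unfold Rsqr in *; nra. }
    destruct (Rle_dec (x * u + y * v) 0). nra.
    apply Rsqr_incr_0_var; unfold Rsqr; nra. }
  rewrite <- (sqrt_Rsqr (p + q)) by lra. apply sqrt_le_1_alt. unfold Rsqr. nra.
Qed.

Lemma Cnorm_rev a b : Cnorm b - Cnorm a <= Cnorm (Cadd a b).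
Proof.
  pose proof (Cnorm_add (Cadd a b) (Copp a)). rewrite Cnorm_opp in H.
  replace (Cadd (Cadd a b) (Copp a)) with b in H by ring. lra.
Qed.

Lemma Rdiv_le_0_compat a b : 0 <= a -> 0 < b -> 0 <= a / b.
Proof. intros; unfold Rdiv; apply Rmult_le_pos; [auto | left; apply Rinv_0_lt_compat; auto]. Qed.

Definition cpl (a b : Cx) (s : R) : Cx := Cadd a (Cmul (RtoC s) b).

Lemma lim_fin (a0 a1 b0 b1 : Cx) (s0 : R) : cpl a1 b1 s0 <> Cz ->
  forall eps, 0 < eps -> exists del, 0 < del /\ forall s, Rabs (s - s0) < del ->
  Cnorm (Cadd (Cdiv (cpl a0 b0 s) (cpl a1 b1 s)) (Copp (Cdiv (cpl a0 b0 s0) (cpl a1 b1 s0)))) < eps.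
Proof.
  intros H0 eps He.
  set (d := Cnorm (cpl a1 b1 s0)). set (nb := Cnorm b1).
  set (K := Csub (Cmul b0 a1) (Cmul a0 b1)). set (nK := Cnorm K).
  assert (Hd : 0 < d) by (apply Cnorm_pos; auto).
  assert (Hnb : 0 <= nb) by apply Cnorm_ge0. assert (HnK : 0 <= nK) by apply Cnorm_ge0.
  exists (Rmin (d / (2 * (nb + 1))) (eps * (d * d) / (2 * (nK + 1)))).
  split. { assert (0 < eps * (d * d)) by (apply Rmult_lt_0_compat; [lra | apply Rmult_lt_0_compat; lra]). apply Rmin_pos; apply Rdiv_lt_0_compat; lra. }
  intros s Hs. set (h := s - s0) in *.
  assert (Hs1 : Rabs h < d / (2 * (nb + 1))) by (eapply Rlt_le_trans; [exact Hs|apply Rmin_l]).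
  assert (Hs2 : Rabs h < eps * (d * d) / (2 * (nK + 1))) by (eapply Rlt_le_trans; [exact Hs|apply Rmin_r]).
  assert (Eden : cpl a1 b1 s = Cadd (cpl a1 b1 s0) (Cmul (RtoC h) b1)) by (unfold cpl, h; rewrite RtoC_sub; unfold Csub; ring).
  assert (Hh : Rabs h * nb <= d / 2).
  { pose proof (Rabs_pos h). apply Rle_trans with (Rabs h * (nb + 1)).
    apply Rmult_le_compat_l; lra.
    apply Rle_trans with (d / (2 * (nb + 1)) * (nb + 1)).
    apply Rmult_le_compat_r; lra. right; field; lra. }
  assert (Hden : d / 2 <= Cnorm (cpl a1 b1 s)).
  { rewrite Eden. pose proof (Cnorm_rev (Cmul (RtoC h) b1) (cpl a1 b1 s0)).
    rewrite Cnorm_mul, Cnorm_RtoC in H. fold d nb in H. replace (Cadd (Cmul (RtoC h) b1) (cpl a1 b1 s0)) with (Cadd (cpl a1 b1 s0) (Cmul (RtoC h) b1)) in H by ring. lra. }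
  assert (Hd2 : cpl a1 b1 s <> Cz).
  { intro E. rewrite E in Hden. unfold Cnorm, RtoC, Re, Im in Hden; simpl in Hden.
    replace (0 * (0 * 1) + 0 * (0 * 1)) with 0 in Hden by ring. rewrite sqrt_0 in Hden. lra. }
  assert (Ediff : Cadd (Cdiv (cpl a0 b0 s) (cpl a1 b1 s)) (Copp (Cdiv (cpl a0 b0 s0) (cpl a1 b1 s0)))
      = Cmul (Cmul (RtoC h) K) (Cinv (Cmul (cpl a1 b1 s) (cpl a1 b1 s0)))).
  { unfold K, cpl, h. rewrite RtoC_sub. unfold cpl in H0, Hd2. field. split; auto. }
  rewrite Ediff, !Cnorm_mul, Cnorm_inv by (apply Cmul_nz; auto). rewrite Cnorm_mul, Cnorm_RtoC. fold nK d.
  set (D := Cnorm (cpl a1 b1 s)) in *.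
  assert (0 < D) by lra.
  apply Rle_lt_trans with (Rabs h * nK * / (d / 2 * d)).
  - apply Rmult_le_compat_l. pose proof (Rabs_pos h); nra.
    apply Rinv_le_contravar. nra. apply Rmult_le_compat_r; lra.
  - apply Rle_lt_trans with (Rabs h * (nK + 1) * / (d / 2 * d)).
    + apply Rmult_le_compat_r. left; apply Rinv_0_lt_compat; nra.
      apply Rmult_le_compat_l; [apply Rabs_pos | lra].
    + replace (Rabs h * (nK + 1) * / (d / 2 * d)) with (Rabs h / (d * d / (2 * (nK + 1)))) by (field; lra).
      apply Rmult_lt_reg_r with (d * d / (2 * (nK + 1))).
      apply Rdiv_lt_0_compat; nra.
      unfold Rdiv at 1. rewrite Rmult_assoc, Rinv_l, Rmult_1_r. 
      replace (eps * (d * d / (2 * (nK + 1)))) with (eps * (d * d) / (2 * (nK + 1))) by (field; lra). auto.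
      apply Rgt_not_eq. apply Rdiv_lt_0_compat; nra.
Qed.


Lemma lim_inf (a0 a1 b0 b1 : Cx) : b1 <> Cz ->
  forall eps, 0 < eps -> exists M, 0 <= M /\ forall s, M <= s ->
  Cnorm (Cadd (Cdiv (cpl a0 b0 s) (cpl a1 b1 s)) (Copp (Cdiv b0 b1))) < eps.
Proof.
  intros Hb eps He.
  set (nb := Cnorm b1). set (na := Cnorm a1).
  set (K := Csub (Cmul a0 b1) (Cmul a1 b0)). set (nK := Cnorm K).
  assert (Hnb : 0 < nb) by (apply Cnorm_pos; auto).
  assert (Hna : 0 <= na) by apply Cnorm_ge0. assert (HnK : 0 <= nK) by apply Cnorm_ge0.
  set (Q := nK / (eps * nb)).
  assert (HQ : 0 <= Q) by (unfold Q; apply Rdiv_le_0_compat; [lra | apply Rmult_lt_0_compat; lra]).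
  exists ((na + Q + 1) / nb). split. apply Rdiv_le_0_compat; lra.
  intros s Hs.
  assert (Hs0 : 0 <= s) by (eapply Rle_trans; [|exact Hs]; apply Rdiv_le_0_compat; lra).
  assert (Hsn : na + Q + 1 <= s * nb).
  { apply Rmult_le_compat_r with (r := nb) in Hs; [|lra].
    replace ((na + Q + 1) / nb * nb) with (na + Q + 1) in Hs by (field; lra). lra. }
  assert (Hden : Q + 1 <= Cnorm (cpl a1 b1 s)).
  { pose proof (Cnorm_rev a1 (Cmul (RtoC s) b1)). rewrite Cnorm_mul, Cnorm_RtoC in H.
    rewrite Rabs_right in H by lra. unfold cpl. fold na nb in H. lra. }
  assert (Hd2 : cpl a1 b1 s <> Cz).
  { intro E. rewrite E in Hden. unfold Cnorm, RtoC, Re, Im in Hden; simpl in Hden.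
    replace (0 * (0 * 1) + 0 * (0 * 1)) with 0 in Hden by ring. rewrite sqrt_0 in Hden. lra. }
  assert (Ediff : Cadd (Cdiv (cpl a0 b0 s) (cpl a1 b1 s)) (Copp (Cdiv b0 b1))
      = Cmul K (Cinv (Cmul b1 (cpl a1 b1 s)))).
  { unfold K. unfold cpl in Hd2 |- *. field. split; auto. }
  rewrite Ediff, Cnorm_mul, Cnorm_inv by (apply Cmul_nz; auto). rewrite Cnorm_mul. fold nK nb.
  set (D := Cnorm (cpl a1 b1 s)) in *.
  assert (0 < D) by lra.
  apply Rmult_lt_reg_r with (nb * D). nra.
  rewrite Rmult_assoc, Rinv_l, Rmult_1_r by nra.
  assert (nK = Q * (eps * nb)) by (unfold Q; field; lra).
  rewrite H0. assert (0 < eps * nb) by (apply Rmult_lt_0_compat; lra).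
  apply Rlt_le_trans with (eps * nb * (Q + 1)). nra.
  replace (eps * (nb * D)) with (eps * nb * D) by ring. apply Rmult_le_compat_l; lra.
Qed.

Open Scope R_scope.

Lemma rv_cpl a0 a1 b0 b1 s V :
  rv (cpl a0 b0 s, cpl a1 b1 s) V =
  (cpl (fst (rv (a0, a1) V)) (fst (rv (b0, b1) V)) s,
   cpl (snd (rv (a0, a1) V)) (snd (rv (b0, b1) V)) s).
Proof. unfold rv, cpl; simpl; f_equal; ring. Qed.

Lemma row0_Tm z s th V j : (j < 2)%nat ->
  mmul (Tm z s th) V 0%nat j =
  (if Nat.eqb j 0 then fst else snd)
   (rv (cpl Co (Copp (Cmul z (RtoC (cos th * sin th)))) s,
        cpl Cz (Copp (Cmul z (RtoC (sin th ^ 2)))) s) V) .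
Proof.
  intros Hj. destruct (JH_vals th) as [E1 [E2 [E3 E4]]].
  unfold mmul, Tm, rv, cpl, delta; simpl Nat.eqb; cbv iota. rewrite E1, E2.
  destruct j as [|[|j]]; [simpl; ring | simpl; ring | lia].
Qed.

Lemma cot_PI2 : cot (PI / 2) = 0.
Proof. unfold cot. rewrite cos_PI2, sin_PI2. field. Qed.

Lemma div_of (A B G : Cx) : B <> Cz -> A = Cmul (Cadd (RtoC 0) G) B -> Cdiv A B = G.
Proof. intros HB ->. field. auto. Qed.

Theorem corollary4p2 (N : nat) (ell th : nat -> R) (L : option R)
  (Hth0 : th 0%nat = PI / 2)
  (Hell : forall k, (k < N)%nat -> 0 < ell k)
  (Hth : forall k, (k < N)%nat -> th k < th (S k) < th k + PI)
  (HL : match L with Some L0 => X ell N < L0 | None => True end)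
  (HthN : ~ in_piZ (th N)) :
  forall (z : Cx), Im z <> 0 ->
  forall (U : R -> nat -> nat -> Cx), solves_IE N ell th L z U ->
  tends_to_L L (fun x => Cdiv (U x 0%nat 0%nat) (U x 0%nat 1%nat))
    (cfrac N ell th L z (kappa N th) 0).
Proof.
  intros z Hz U HIE.
  assert (Hz0 : z <> Cz) by (apply Im_nz; auto).
  assert (Hs : sin (th N) <> 0) by (apply sin_nz_of; auto).
  assert (Hc : cos (th N) = cot (th N) * sin (th N)) by (unfold cot; field; auto).
  set (V := Vm ell th z N).
  set (b0 := Copp (Cmul z (RtoC (cos (th N) * sin (th N))))).
  set (b1 := Copp (Cmul z (RtoC (sin (th N) ^ 2)))).
  set (al := rv (Co, Cz) V). set (be := rv (b0, b1) V).
  assert (Hrow : forall x, in_dom L x -> X ell N <= x ->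
    U x 0%nat 0%nat = cpl (fst al) (fst be) (x - X ell N) /\
    U x 0%nat 1%nat = cpl (snd al) (snd be) (x - X ell N)).
  { intros x Hx HxN. rewrite !(U_last N ell th L z U HIE Hell HL x Hx HxN) by lia.
    rewrite !row0_Tm by lia. simpl Nat.eqb; cbv iota. rewrite rv_cpl. fold V b0 b1 al be. auto. }
  assert (CH : forall w g, snd w <> Cz -> fst w = Cmul (Cadd (RtoC (cot (th N))) g) (snd w) ->
     Inv z g -> snd (rv w V) <> Cz /\ Cdiv (fst (rv w V)) (snd (rv w V)) = cfg N ell th L z (kappa N th) 0 g).
  { intros w g H1 H2 H3. destruct (chain N ell th L z Hth0 Hell Hth HthN Hz w g H1 H2 H3 (kappa N th) (le_n _))
      as [C1 [C2 _]].
    rewrite Nat.sub_diag, (kj_0 N th Hth0 HthN), Nat.sub_0_r, Hth0, cot_PI2 in *.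
    unfold V. rewrite rv_V. split; auto. apply div_of; auto. }
  rewrite cfrac_cfg. simpl (0 + kappa N th)%nat.
  assert (Hlj : forall L', lj N ell th L' (kappa N th) =
     match L' with Some L0 => Some ((L0 - X ell N) * sin (th N) ^ 2) | None => None end).
  { intros L'. unfold lj, ellx. rewrite (kj_kappa N th Hth0 HthN).
    destruct (Nat.ltb_spec N N); [lia|]. destruct L'; reflexivity. }
  rewrite Hlj.
  assert (Hsq : 0 < sin (th N) ^ 2).
  { simpl. rewrite Rmult_1_r. apply Rsqr_pos_lt in Hs; exact Hs. }
  destruct L as [L0|].
  - set (s0 := L0 - X ell N). assert (Hs0 : 0 < s0) by (unfold s0; lra).
    set (u := Cmul (RtoC (- (s0 * sin (th N) ^ 2))) z).
    assert (Hu : u <> Cz).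
    { apply Cmul_nz; auto. apply RtoC_nz. assert (0 < s0 * sin (th N) ^ 2) by (apply Rmult_lt_0_compat; auto). lra. }
    change (inv_mlz (Some (s0 * sin (th N) ^ 2)) z) with (Cinv u).
    destruct (CH (cpl Co b0 s0, cpl Cz b1 s0) (Cinv u)) as [C1 C2].
    + simpl snd. replace (cpl Cz b1 s0) with u; auto.
      unfold u, cpl, b1. rewrite RtoC_opp, RtoC_mul. ring.
    + simpl fst; simpl snd. replace (cpl Cz b1 s0) with u.
      2:{ unfold u, cpl, b1. rewrite RtoC_opp, RtoC_mul. ring. }
      unfold u, cpl, b0. rewrite Hc.
      replace (s0 * sin (th N) ^ 2) with (s0 * sin (th N) * sin (th N)) by ring.
      rewrite RtoC_opp, !RtoC_mul. field. split; auto.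
      intro E. assert (Hp : 0 < s0 * sin (th N) * sin (th N)).
      { rewrite Rmult_assoc. apply Rmult_lt_0_compat; auto. simpl in Hsq. lra. }
      apply (RtoC_nz _ (Rgt_not_eq _ _ Hp)). rewrite !RtoC_mul.
      transitivity (Copp (Copp (Cmul (Cmul (RtoC s0) (RtoC (sin (th N)))) (RtoC (sin (th N)))))); [ring|].
      rewrite E. ring.
    + right. rewrite Im_inv_sign by auto. unfold u at 1. rewrite Im_Rmul.
      pose proof (Cnz_norm_pos u Hu). pose proof (Rinv_0_lt_compat _ H).
      assert (0 < s0 * sin (th N) ^ 2) by (apply Rmult_lt_0_compat; auto).
      assert (0 < Im z * Im z) by (apply Rsqr_pos_lt in Hz; unfold Rsqr in Hz; lra).
      replace (- (- (s0 * sin (th N) ^ 2) * Im z * Im z)) with ((s0 * sin (th N) ^ 2) * (Im z * Im z)) by ring.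
      apply Rmult_lt_0_compat; auto. apply Rmult_lt_0_compat; auto.
    + rewrite rv_cpl in C1, C2. fold al be in C1, C2. simpl fst in *; simpl snd in *.
      rewrite <- C2. intros eps He.
      destruct (lim_fin (fst al) (snd al) (fst be) (snd be) s0 C1 eps He) as [del [Hdel Hlim]].
      exists (Rmin del s0). split. apply Rmin_pos; auto.
      intros x Hx Hx2.
      assert (Hm : Rmin del s0 <= s0) by apply Rmin_r. assert (Hm' : Rmin del s0 <= del) by apply Rmin_l.
      assert (HxN : X ell N <= x) by (unfold s0 in *; lra).
      destruct (Hrow x Hx HxN) as [E0 E1]. rewrite E0, E1.
      apply Hlim. destruct Hx as [_ Hx]. unfold s0. rewrite Rabs_left; lra.
  - change (inv_mlz None z) with Cz.
    destruct (CH (b0, b1) Cz) as [C1 C2].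
    + simpl. unfold b1. intro E. apply (Cmul_nz z (RtoC (sin (th N) ^ 2)) Hz0).
      apply RtoC_nz; lra.
      transitivity (Copp (Copp (Cmul z (RtoC (sin (th N) ^ 2))))); [ring|]. rewrite E. ring.
    + simpl. unfold b0, b1. rewrite Hc.
      replace (sin (th N) ^ 2) with (sin (th N) * sin (th N)) by ring.
      rewrite !RtoC_mul. ring.
    + left; reflexivity.
    + fold be in C1, C2. rewrite <- C2. intros eps He.
      destruct (lim_inf (fst al) (snd al) (fst be) (snd be) C1 eps He) as [M [HM Hlim]].
      exists (X ell N + M). intros x Hx Hx2.
      destruct (Hrow x Hx ltac:(lra)) as [E0 E1]. rewrite E0, E1.
      apply Hlim. lra.
Qed.
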